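(* Let $\epsilon\in(0,1)$ and $\epsilon'=\epsilon/14$. Run Algorithm $\mathsf{DLA}$ on $(f,V,B)$ with parameter $\epsilon$. Let $S$ be its output, and let $X,Y$ be the two sets at the end of its while-loop (Phase 1). Let $O$ be an optimal solution, $\mathrm{opt}=f(O)$, and let $r\in\arg\max_{o\in O}c(o)$. Suppose $c(r)\ge(1-\epsilon')B$. Then at least one of the following holds: (e) $f(S)\ge\frac{(1-\epsilon')^2}{6}\mathrm{opt}$; (f) there exists $X'\subseteq X$ with $f(O\cup X')\le 2f(S)+\max\left\{\frac{(1-\epsilon')\mathrm{opt}}{6},\ f(S)+\frac{\epsilon'\mathrm{opt}}{6}\right\}$. Likewise, at least one of the following holds: (g) $f(S)\ge\frac{(1-\epsilon')^2}{6}\mathrm{opt}$; (h) there exists $Y'\subseteq Y$ with $f(O\cup Y')\le 2f(S)+\max\left\{\frac{(1-\epsilon')\mathrm{opt}}{6},\ f(S)+\frac{\epsilon'\mathrm{opt}}{6}\right\}$.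
   Context: Setting: $V$ is a finite ground set of size $n$. $f:2^V\to\mathbb{R}_{\ge 0}$ is a non-negative submodular set function with $f(\emptyset)=0$. Each $e\in V$ has a cost $c(e)>0$, and $c(S)=\sum_{e\in S}c(e)$. $B>0$ is a budget, and $c(e)\le B$ for every $e\in V$. An optimal solution is $O\in\arg\max\{f(T):T\subseteq V,\ c(T)\le B\}$. The notation $f(e\mid S)=f(S\cup\{e\})-f(S)$ is used. Algorithm $\mathsf{LA}$ on $(f,V,B)$ runs as follows. Let $V_1=\{e:c(e)\le B/2\}$, $e_{\max}\in\arg\max_{e\in V}f(e)$ and $X=Y=\emptyset$. Process each $e\in V_1$ once. Among $Z\in\{X,Y\}$ with $f(e\mid Z)/c(e)\ge f(Z)/B$, add $e$ to one maximizing $f(e\mid Z)/c(e)$, if any such $Z$ exists. Then for $T\in\{X,Y\}$, let $T'$ be the largest-cost set formed by the last $j$ elements added to $T$ ($0\le j\le |T|$) among those with cost at most $B$. Return the best of $X'$, $Y'$ and $\{e_{\max}\}$ under $f$. Algorithm $\mathsf{DLA}$ on $(f,V,B)$ with parameter $\epsilon\in(0,1)$ runs as follows. 1. Let $S'$ be the output of $\mathsf{LA}(f,V,B)$ and set $\Gamma=f(S')$. Set $\epsilon'=\epsilon/14$ and $\Delta=\lceil\log(1/\epsilon')/\epsilon'\rceil$. 2. Phase 1. Set $\theta=19\Gamma/(6\epsilon' B)$ and $X=Y=\emptyset$. While $\theta\ge\Gamma(1-\epsilon')/(6B)$, do the following. Process each $e\in V\setminus(X\cup Y)$ in a fixed order.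 Among $T\in\{X,Y\}$ with $c(T\cup\{e\})\le B$ and $f(e\mid T)/c(e)\ge\theta$, choose one maximizing $f(e\mid T)/c(e)$; if such a $T$ exists, add $e$ to it. After the pass, set $\theta\leftarrow(1-\epsilon')\theta$. 3. Phase 2. For $T\in\{X,Y\}$, let $T^i$ be the set of the first $i$ elements added to $T$. For each $l=0,1,\dots,\Delta$: - let $X'_{(l)}=X^i$ for the largest $i\le|X|$ with $c(X^i)\le\epsilon'B(1+\epsilon')^l$; - let $e_X\in\arg\max\{f(X'_{(l)}\cup\{e\}): e\in V,\ c(X'_{(l)}\cup\{e\})\le B\}$, and set $X_{(l)}=X'_{(l)}\cup\{e_X\}$; - define $Y'_{(l)}$, $e_Y$ and $Y_{(l)}$ analogously from $Y$. 4. Return the set $S$ of maximum $f$ value among $S'$, $X$, $Y$, $X_{(0)},\dots,X_{(\Delta)}$, $Y_{(0)},\dots,Y_{(\Delta)}$. *)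

(* Defs.v *)
From mathcomp Require Import all_boot all_order all_algebra.
From mathcomp Require Import all_classical all_reals exp.
Set Implicit Arguments. Unset Strict Implicit. Unset Printing Implicit Defensive.
Import Order.TTheory GRing.Theory Num.Theory.
Local Open Scope ring_scope.

Section Algo.
Variables (R : realType) (T : finType).
Variables (f : {set T} -> R) (c : T -> R) (B : R).
Variable ord : seq T.
(* [tie X Y e] : tie-breaking rule (true = put e into X) used when both
   candidate sets give the same marginal density *)
Variable tie : seq T -> seq T -> T -> bool.

(* the ground set V is the whole finite type T *)
Definition cost (A : {set T}) : R := \sum_(e in A) c e.

Definition sset (s : seq T) : {set T} := [set x in s].

Definition bestf (g : {set T} -> R) (d : {set T}) (s : seq {set T}) : {set T} :=
  foldl (fun b A => if g b < g A then A else b) d s.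

Definition argmax_set (g : {set T} -> R) (d : {set T}) (s : seq {set T}) :=
  bestf g (head d s) (behead s).

Definition dens (X : seq T) (e : T) : R := (f (e |: sset X) - f (sset X)) / c e.

Definition choose_put (X Y : seq T) (e : T) (okX okY : bool) : seq T * seq T :=
  let gX := dens X e in let gY := dens Y e in
  if okX && okY then
    (if (gY < gX) || ((gX == gY) && tie X Y e) then (rcons X e, Y)
     else (X, rcons Y e))
  else if okX then (rcons X e, Y)
  else if okY then (X, rcons Y e)
  else (X, Y).

Definition la_step (st : seq T * seq T) (e : T) : seq T * seq T :=
  let: (X, Y) := st in
  if c e <= B / 2 then
    choose_put X Y e (f (sset X) / B <= dens X e) (f (sset Y) / B <= dens Y e)
  else (X, Y).

Definition la_loop : seq T * seq T := foldl la_step ([::], [::]) ord.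

Definition la_tail (s : seq T) : {set T} :=
  argmax_set cost (finset.set0 : {set T})
    [seq sset (drop (size s - j) s) | j <- iota 0 (size s).+1
        & cost (sset (drop (size s - j) s)) <= B].

Definition LA : {set T} :=
  argmax_set f (finset.set0 : {set T})
    ([:: la_tail la_loop.1; la_tail la_loop.2] ++ [seq [set e] | e <- enum T]).

Variable eps : R.
Definition eps' : R := eps / 14.
Definition Delta : nat := absz (Num.ceil (ln (1 / eps') / eps')).
Definition Gamma : R := f LA.

(* value of theta during the j-th pass (j = 0, 1, ...) *)
Definition theta (j : nat) : R := 19 * Gamma / (6 * eps' * B) * (1 - eps') ^+ j.
Definition theta_thr : R := Gamma * (1 - eps') / (6 * B).

Definition dla_step (th : R) (st : seq T * seq T) (e : T) : seq T * seq T :=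
  let: (X, Y) := st in
  if (e \in X) || (e \in Y) then (X, Y) else
  choose_put X Y e
    ((cost (e |: sset X) <= B) && (th <= dens X e))
    ((cost (e |: sset Y) <= B) && (th <= dens Y e)).

Definition dla_pass (th : R) (st : seq T * seq T) := foldl (dla_step th) st ord.

Fixpoint phase1 (j : nat) : seq T * seq T :=
  if j is j'.+1 then dla_pass (theta j') (phase1 j') else ([::], [::]).

(* the while loop performs exactly N passes *)
Definition phase1_stops_at (N : nat) : Prop :=
  (forall j, (j < N)%N -> theta_thr <= theta j) /\ theta N < theta_thr.

Definition prefix_sel (s : seq T) (l : nat) : {set T} :=
  sset (take (\max_(i < (size s).+1 |
                 cost (sset (take i s)) <= eps' * B * (1 + eps') ^+ l) i) s).

Definition phase2_set (s : seq T) (l : nat) : {set T} :=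
  let X' := prefix_sel s l in
  argmax_set f X' [seq e |: X' | e <- enum T & cost (e |: X') <= B].

(* output of DLA when Phase 1 performs N passes *)
Definition DLA (N : nat) : {set T} :=
  let X := (phase1 N).1 in let Y := (phase1 N).2 in
  argmax_set f (finset.set0 : {set T})
    ([:: LA; sset X; sset Y]
       ++ [seq phase2_set X l | l <- iota 0 Delta.+1]
       ++ [seq phase2_set Y l | l <- iota 0 Delta.+1]).

End Algo.

(* Main.v *)
Require Import Defs.
From mathcomp Require Import all_boot all_order all_algebra.
From mathcomp Require Import all_classical all_reals exp.
From mathcomp Require Import ring lra zify.
From mathcomp Require Import seq ssrnat fintype bigop ssralg ssrnum order finset.
Import Order.TTheory GRing.Theory Num.Theory.
Local Open Scope ring_scope.
Set Implicit Arguments. Unset Strict Implicit. Unset Printing Implicit Defensive.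

Section Gen.
Variables (R : realType) (T : finType) (f : {set T} -> R) (c : T -> R).
Hypotheses (fnn : forall A, 0 <= f A) (f0 : f finset.set0 = 0)
  (fsub : forall A1 A2 : {set T}, f (A1 :|: A2) + f (A1 :&: A2) <= f A1 + f A2)
  (cpos : forall e, 0 < c e).

Lemma dr (A Bs : {set T}) e : A \subset Bs -> e \notin Bs ->
  f (e |: Bs) - f Bs <= f (e |: A) - f A.
Proof.
move=> sAB eB; have := fsub (e |: A) Bs.
have -> : (e |: A) :|: Bs = e |: Bs by rewrite -setUA (setUidPr sAB).
have -> : (e |: A) :&: Bs = A.
  apply/setP=> x; rewrite !inE; case: (x =P e) => [->|_] /=.
    by rewrite (negbTE eB); apply/esym/negbTE; apply: contra eB => /(subsetP sAB).
  by apply/idP/idP => [/andP[]//|xA]; rewrite xA (subsetP sAB).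
lra.
Qed.

Lemma subadd (A1 A2 : {set T}) : f (A1 :|: A2) <= f A1 + f A2.
Proof. have := fsub A1 A2; have := fnn (A1 :&: A2); lra. Qed.

Lemma sset_cons (x : T) s : sset (x :: s) = x |: sset s.
Proof. by apply/setP=> y; rewrite !inE. Qed.
Lemma sset_rcons s (x : T) : sset (rcons s x) = x |: sset s.
Proof. by apply/setP=> y; rewrite !inE mem_rcons inE. Qed.
Lemma sset_cat (s t : seq T) : sset (s ++ t) = sset s :|: sset t.
Proof. by apply/setP=> y; rewrite !inE mem_cat. Qed.
Lemma in_sset (x : T) s : (x \in sset s) = (x \in s).
Proof. by rewrite inE. Qed.

Lemma union_seq (Z : {set T}) s : uniq s -> (forall x, x \in s -> x \notin Z) ->
  f (Z :|: sset s) <= f Z + \sum_(a <- s) (f (a |: Z) - f Z).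
Proof.
elim: s => [|a s IH] /=.
  move=> _ _; rewrite big_nil addr0.
  have -> : sset [::] = finset.set0 :> {set T} by apply/setP=> x; rewrite !inE.
  by rewrite setU0.
move=> /andP[ans us] dis.
have dis' : forall x, x \in s -> x \notin Z.
  by move=> x xs; apply: dis; rewrite inE xs orbT.
have aZ : a \notin Z by apply: dis; rewrite mem_head.
rewrite big_cons sset_cons.
have h1 := IH us dis'.
have h2 := @dr Z (Z :|: sset s) a (subsetUl _ _).
have h3 : a \notin Z :|: sset s by rewrite inE negb_or aZ in_sset.
have := h2 h3. rewrite setUCA. lra.
Qed.

Lemma union_set (Z A : {set T}) :
  f (Z :|: A) <= f Z + \sum_(a in A :\: Z) (f (a |: Z) - f Z).
Proof.
have -> : Z :|: A = Z :|: sset (enum (A :\: Z)).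
  apply/setP=> x; rewrite !inE mem_enum !inE.
  by case: (x \in Z); rewrite //= andbT.
rewrite -big_enum /=.
apply: union_seq; first exact: enum_uniq.
by move=> x; rewrite mem_enum !inE => /andP[].
Qed.

End Gen.
Section Gen1.
Variables (R : realType) (T : finType) (f : {set T} -> R) (c : T -> R) (B : R)
  (tie : seq T -> seq T -> T -> bool).

Lemma bestf_ge g d s : g d <= g (bestf g d s) /\
  forall A, A \in s -> g A <= g (bestf (T:=T) (R:=R) g d s).
Proof.
elim: s d => [|a s IH] d /=; first by split=> //.
have [h1 h2] := IH (if g d < g a then a else d).
split.
  by apply: le_trans h1; case: ifP => // /ltW h.
move=> A; rewrite in_cons => /orP[/eqP->|/h2//].
by apply: le_trans h1; case: ifP => //; rewrite ltNge => /negbFE h.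
Qed.

Lemma bestf_in g d s : bestf (T:=T) (R:=R) g d s \in d :: s.
Proof.
elim: s d => [|a s IH] d /=; first by rewrite mem_head.
have := IH (if g d < g a then a else d).
case: ifP => _; rewrite !in_cons.
  by case/orP=> ->; rewrite ?orbT.
by case/orP=> ->; rewrite ?orbT.
Qed.

Lemma argmax_ge g d s A : A \in s -> g A <= g (argmax_set (T:=T) (R:=R) g d s).
Proof.
case: s => [//|a s]; rewrite /argmax_set /= in_cons => /orP[/eqP->|As].
  by have [] := bestf_ge g a s.
by have [_ ] := bestf_ge g a s; apply.
Qed.

Lemma argmax_in g d s : s != [::] -> argmax_set (T:=T) (R:=R) g d s \in s.
Proof. by case: s => [//|a s] _; rewrite /argmax_set /=; apply: bestf_in. Qed.

Definition spec (X Y X' Y' : seq T) e (okX okY : bool) :=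
  [\/ [/\ X' = rcons X e, Y' = Y, okX & (okY -> dens f c Y e <= dens f c X e)],
      [/\ X' = X, Y' = rcons Y e, okY & (okX -> dens f c X e <= dens f c Y e)] |
      [/\ X' = X, Y' = Y, ~~ okX & ~~ okY]].

Lemma choose_spec X Y e okX okY :
  spec X Y (choose_put f c tie X Y e okX okY).1 (choose_put f c tie X Y e okX okY).2 e okX okY.
Proof.
rewrite /choose_put; case: okX; case: okY => /=.
- case: ifP => [/orP[/ltW h|/andP[/eqP h _]]|/negbT]; first by apply: Or31.
  + by apply: Or31; split=> //; rewrite h.
  + by rewrite negb_or => /andP[]; rewrite -leNgt => h _; apply: Or32.
- by apply: Or31.
- by apply: Or32.
- by apply: Or33.
Qed.

Lemma spec_sym X Y X' Y' e okX okY :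
  spec X Y X' Y' e okX okY -> spec Y X Y' X' e okY okX.
Proof.
by case=> [[? ? ? ?]|[? ? ? ?]|[? ? ? ?]]; [apply: Or32|apply: Or31|apply: Or33].
Qed.

Definition side (b : bool) (st : seq T * seq T) := if b then st else (st.2, st.1).

Definition LRel (U V U' V' : seq T) e :=
  (B / 2 < c e /\ U' = U /\ V' = V) \/
  (c e <= B / 2 /\ spec U V U' V' e (f (sset U) / B <= dens f c U e)
                                     (f (sset V) / B <= dens f c V e)).

Lemma la_rel b st e : let s1 := side b st in let s2 := side b (la_step f c B tie st e) in
  LRel s1.1 s1.2 s2.1 s2.2 e.
Proof.
case: st => X Y; rewrite /la_step /LRel.
case: ifP => [h|/negbT]; last by rewrite -ltNge => h; left; case: b.
right; split=> //; case: b => /=; first exact: choose_spec.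
by apply: spec_sym; apply: choose_spec.
Qed.

Definition okD th (U : seq T) e := (cost c (e |: sset U) <= B) && (th <= dens f c U e).

Definition DRel th (U V U' V' : seq T) e :=
  ((e \in U) || (e \in V)) /\ U' = U /\ V' = V \/
  (e \notin U /\ e \notin V /\ spec U V U' V' e (okD th U e) (okD th V e)).

Lemma dla_rel th b st e : let s1 := side b st in
  let s2 := side b (dla_step f c B tie th st e) in
  DRel th s1.1 s1.2 s2.1 s2.2 e.
Proof.
case: st => X Y; rewrite /dla_step /DRel.
case: ifP => [h|/negbT]; first by left; case: b => //=; rewrite orbC.
rewrite negb_or => /andP[h1 h2].
case: b => /=; right; split=> //; split=> //; first exact: choose_spec.
by apply: spec_sym; apply: choose_spec.
Qed.

Lemma foldl_ind (S : Type) (g : S -> T -> S) (P : seq T -> S -> Prop) s p st :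
  P p st -> (forall p st e, P p st -> P (rcons p e) (g st e)) ->
  P (p ++ s) (foldl g st s).
Proof.
elim: s p st => [|a s IH] p st /=; first by rewrite cats0.
move=> Pp H; rewrite -cat_rcons; apply: IH => //; exact: H.
Qed.

End Gen1.

Lemma foldl_ind_u (T : eqType) (S : Type) (g : S -> T -> S) (P : seq T -> S -> Prop) s p st :
  uniq (p ++ s) -> P p st ->
  (forall p st e, e \notin p -> P p st -> P (rcons p e) (g st e)) ->
  P (p ++ s) (foldl g st s).
Proof.
elim: s p st => [|a s IH] p st /=; first by rewrite cats0.
move=> u Pp H; rewrite -cat_rcons; apply: IH => //.
  by rewrite cat_rcons.
apply: H => //; move: u; rewrite cat_uniq /= => /and3P[_ /norP[]] //.
Qed.

Section LAsec.
Variables (R : realType) (T : finType) (f : {set T} -> R) (c : T -> R) (B : R)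
  (tie : seq T -> seq T -> T -> bool).
Hypotheses (fnn : forall A, 0 <= f A) (f0 : f finset.set0 = 0)
  (fsub : forall A1 A2 : {set T}, f (A1 :|: A2) + f (A1 :&: A2) <= f A1 + f A2)
  (cpos : forall e, 0 < c e) (Bpos : 0 < B).

Lemma densE (U : seq T) e : dens f c U e * c e = f (e |: sset U) - f (sset U).
Proof. by rewrite /dens divfK // gt_eqF. Qed.

Lemma ok_gain (U : seq T) e k : k <= dens f c U e -> k * c e <= f (e |: sset U) - f (sset U).
Proof. move=> h; rewrite -densE; apply: ler_wpM2r => //; exact: ltW. Qed.

Lemma nok_gain (U : seq T) e k : ~~ (k <= dens f c U e) -> f (e |: sset U) - f (sset U) < k * c e.
Proof. by rewrite -ltNge => h; rewrite -densE ltr_pM2r. Qed.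

Lemma dens_le (U V : seq T) e : dens f c U e <= dens f c V e ->
  f (e |: sset U) - f (sset U) <= f (e |: sset V) - f (sset V).
Proof. by move=> h; rewrite -!densE ler_wpM2r // ltW. Qed.

Lemma fB_ge0 (U : seq T) : 0 <= f (sset U) / B.
Proof. by rewrite divr_ge0 // ltW. Qed.

Variable A : {set T}.
Hypothesis Acheap : forall o, o \in A -> c o <= B / 2.

Inductive chain : seq T -> Prop :=
| ch0 : chain [::]
| chS s e : chain s -> e \notin s -> c e <= B / 2 ->
    f (sset s) / B * c e <= f (e |: sset s) - f (sset s) -> chain (rcons s e).

Definition invL (p U V : seq T) :=
  \sum_(o <- p | (o \in A) && (o \notin U))
     (f (o |: sset U) - f (sset U) - f (sset U) / B * c o) <= f (sset V).

Lemma sub_rcons (p W : seq T) e : {subset W <= p} -> {subset W <= rcons p e}.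
Proof. by move=> sW x /sW xp; rewrite mem_rcons in_cons xp orbT. Qed.

Lemma lrel_side (p U V U' V' : seq T) e :
  LRel f c B U V U' V' e -> e \notin p -> {subset U <= p} -> {subset V <= p} ->
  chain U -> invL p U V ->
  [/\ {subset U' <= rcons p e}, chain U' & invL (rcons p e) U' V'].
Proof.
move=> hR ep sU sV chU inv; rewrite /invL in inv.
have eU : e \notin U by apply: contra ep; apply: sU.
have eV : e \notin V by apply: contra ep; apply: sV.
case: hR => [[ce [-> ->]]|[ce sp]].
  split; [exact: sub_rcons | done | ].
  have eA : (e \in A) = false by apply/negbTE/negP => /Acheap; lra.
  by rewrite /invL big_rcons /= eA /= addr0.
case: sp => [[-> -> okU okV]|[-> -> okV okU]|[-> -> nU nV]].
- split.
  + move=> x; rewrite !mem_rcons !in_cons => /orP[->//|/sU ->]; by rewrite orbT.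
  + by apply: chS => //; apply: ok_gain.
  + rewrite /invL big_rcons /= mem_rcons in_cons eqxx /= andbF addr0.
    apply: le_trans inv; rewrite big_seq_cond [X in _ <= X]big_seq_cond.
    have -> : \sum_(i <- p | (i \in p) && ((i \in A) && (i \notin rcons U e)))
       (f (i |: sset (rcons U e)) - f (sset (rcons U e)) - f (sset (rcons U e)) / B * c i) =
       \sum_(i <- p | (i \in p) && ((i \in A) && (i \notin U)))
       (f (i |: sset (rcons U e)) - f (sset (rcons U e)) - f (sset (rcons U e)) / B * c i).
      apply: eq_bigl => i; case ip: (i \in p) => //=.
      rewrite mem_rcons in_cons; case: (i =P e) => [ie|] //=.
      by move: ep; rewrite -ie ip.
    apply: ler_sum => o /andP[op /andP[oA oU]].
    rewrite sset_rcons.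
    have oe : o != e by apply/eqP => oe; move: ep; rewrite -oe op.
    have h1' : o \notin e |: sset U by rewrite !inE negb_or oe oU.
    have h1 : f (o |: (e |: sset U)) - f (e |: sset U) <= f (o |: sset U) - f (sset U).
      by apply: dr => //; apply: subsetUr.
    have h2 := ok_gain okU.
    have h3 : f (sset U) / B * c o <= f (e |: sset U) / B * c o.
      apply: ler_wpM2r; first exact: ltW.
      apply: ler_wpM2r; first by rewrite invr_ge0 ltW.
      have := fB_ge0 U; have := cpos e; nra.
    lra.
- split => //; first exact: sub_rcons.
  rewrite /invL big_rcons /= sset_rcons.
  have gV := ok_gain okV.
  have g0 : 0 <= f (sset V) / B * c e by rewrite mulr_ge0 ?fB_ge0 // ltW.
  case: ifP => _; last lra.
  case okU' : (f (sset U) / B <= dens f c U e).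
    have := dens_le (okU okU'); have := mulr_ge0 (fB_ge0 U) (ltW (cpos e)); lra.
  have := nok_gain (negbT okU'); lra.
- split => //; first exact: sub_rcons.
  rewrite /invL big_rcons /=.
  case: ifP => _; last by rewrite addr0.
  have := nok_gain nU; lra.
Qed.

Lemma lrel_disj (p U V U' V' : seq T) e :
  LRel f c B U V U' V' e -> e \notin p -> {subset U <= p} -> {subset V <= p} ->
  (forall x, x \in U -> x \notin V) -> (forall x, x \in U' -> x \notin V').
Proof.
move=> hR ep sU sV dUV.
have eU : e \notin U by apply: contra ep; apply: sU.
have eV : e \notin V by apply: contra ep; apply: sV.
case: hR => [[ce [-> ->]]//|[ce [[-> -> _ _]|[-> -> _ _]|[-> -> _ _]]]] // x.
  rewrite mem_rcons in_cons => /orP[/eqP->//|]; exact: dUV.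
move=> xU; rewrite mem_rcons in_cons negb_or dUV // andbT.
by apply/eqP=> xe; move: eU; rewrite -xe xU.
Qed.

Definition LInv (p : seq T) (st : seq T * seq T) :=
  [/\ {subset st.1 <= p}, {subset st.2 <= p}, (forall x, x \in st.1 -> x \notin st.2) &
      [/\ chain st.1, chain st.2, invL p st.1 st.2 & invL p st.2 st.1]].

Lemma la_loop_inv ord : uniq ord -> LInv ord (la_loop f c B ord tie).
Proof.
move=> u; rewrite /la_loop -[ord]cat0s; apply: foldl_ind_u => //.
  split=> //; split; try exact: ch0; by rewrite /invL big_nil f0 ?lexx //= /sset;
    have -> : [set x in [::]] = finset.set0 :> {set T} by apply/setP=> x; rewrite !inE.
move=> p st e ep [s1 s2 d [c1 c2 i1 i2]].
have hT := la_rel f c B tie true st e.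
have hF := la_rel f c B tie false st e.
simpl in hT, hF.
have [t1 t2 t3] := lrel_side hT ep s1 s2 c1 i1.
have [u1 u2 u3] := lrel_side hF ep s2 s1 c2 i2.
split; [exact: t1 | exact: u1 | | by split].
by move=> x; apply: (lrel_disj hT ep s1 s2 d).
Qed.

End LAsec.

Section LA2.
Variables (R : realType) (T : finType) (f : {set T} -> R) (c : T -> R) (B : R)
  (tie : seq T -> seq T -> T -> bool).
Hypotheses (fnn : forall A, 0 <= f A) (f0 : f finset.set0 = 0)
  (fsub : forall A1 A2 : {set T}, f (A1 :|: A2) + f (A1 :&: A2) <= f A1 + f A2)
  (cpos : forall e, 0 < c e) (Bpos : 0 < B).

Lemma sum_sub (I : Type) (r : seq I) (P Q : pred I) (F : I -> R) :
  (forall i, P i -> Q i) -> (forall i, Q i -> 0 <= F i) ->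
  \sum_(i <- r | P i) F i <= \sum_(i <- r | Q i) F i.
Proof.
move=> PQ F0; rewrite big_mkcond [X in _ <= X]big_mkcond; apply: ler_sum => i _.
case Pi: (P i); first by rewrite PQ.
by case Qi: (Q i) => //; apply: F0.
Qed.

Lemma sum_ord (ord : seq T) (P : pred T) (F : T -> R) : perm_eq ord (enum T) ->
  \sum_(o <- ord | P o) F o = \sum_(o | P o) F o.
Proof.
move=> h; rewrite (perm_big _ h) big_enum_cond; apply: eq_bigl => i.
by rewrite inE.
Qed.

Lemma cost_ge0 (A : {set T}) : 0 <= cost c A.
Proof. by apply: sumr_ge0 => i _; apply: ltW. Qed.

Lemma costU1 x (A : {set T}) : x \notin A -> cost c (x |: A) = c x + cost c A.
Proof. by move=> xA; rewrite /cost big_setU1. Qed.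

Lemma sset_nil : sset [::] = finset.set0 :> {set T}.
Proof. by apply/setP=> x; rewrite !inE. Qed.

Lemma cost0 : cost c finset.set0 = 0.
Proof. by rewrite /cost big_set0. Qed.

Lemma cost_sub (A1 A2 : {set T}) : A1 \subset A2 -> cost c A1 <= cost c A2.
Proof.
move=> s; rewrite /cost; apply: sum_sub => [i|i _]; last exact: ltW.
exact: (subsetP s).
Qed.

Lemma chain_inv s e : chain f c B (rcons s e) ->
  [/\ chain f c B s, e \notin s, c e <= B / 2 &
      f (sset s) / B * c e <= f (e |: sset s) - f (sset s)].
Proof.
move=> h; inversion h. by clear h; case: s H0 => [|? ?].
by case: (rcons_inj H) => <- <-.
Qed.

Lemma chain_uniq s : chain f c B s -> uniq s.
Proof.
elim/last_ind: s => [//|s e IH] /chain_inv [h1 h2 _ _].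
by rewrite rcons_uniq h2 IH.
Qed.

Lemma chain_cheap s : chain f c B s -> forall x, x \in s -> c x <= B / 2.
Proof.
elim/last_ind: s => [//|s e IH] /chain_inv [h1 h2 h3 _] x.
by rewrite mem_rcons in_cons => /orP[/eqP->//|]; apply: IH.
Qed.

Lemma chain_gain P Q : chain f c B (P ++ Q) ->
  f (sset P) / B * cost c (sset Q) <= f (sset (P ++ Q)) - f (sset P).
Proof.
elim/last_ind: Q => [|Q e IH]; first by rewrite cats0 sset_nil cost0 mulr0 subrr.
rewrite -rcons_cat => /chain_inv [h1 h2 h3 h4].
have := IH h1.
have eQ : e \notin sset Q by rewrite in_sset; apply: contra h2; rewrite mem_cat orbC => ->.
rewrite sset_rcons costU1 // sset_rcons.
move=> h5.
have k0 : 0 <= f (sset P) / B * cost c (sset Q).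
  by apply: mulr_ge0; [apply: divr_ge0 => //; apply: ltW | apply: cost_ge0].
have k1 : f (sset P) / B * c e <= f (sset (P ++ Q)) / B * c e.
  apply: ler_wpM2r; first exact: ltW.
  apply: ler_wpM2r; [by rewrite invr_ge0 ltW | lra].
rewrite mulrDr; lra.
Qed.

Lemma tail_bound s : chain f c B s -> f (sset s) <= 3 * f (la_tail c B s).
Proof.
move=> ch; have us := chain_uniq ch.
set n := size s.
set F := fun j => sset (drop (n - j) s).
set L := [seq F j | j <- iota 0 n.+1 & cost c (F j) <= B].
have L0 : L != [::].
  rewrite /L /= /F subn0 drop_size sset_nil cost0 ifT //; exact: ltW.
have Lin : la_tail c B s \in L by apply: argmax_in.
have Lmax : forall j', (j' < n.+1)%N -> cost c (F j') <= B -> cost c (F j') <= cost c (la_tail c B s).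
  move=> j' hj hc; apply: argmax_ge; apply: map_f.
  by rewrite mem_filter hc mem_iota.
case/mapP: Lin => j; rewrite mem_filter mem_iota add0n => /andP[hcj /andP[_ hj]] eqt.
rewrite eqt in Lmax *.
case k0 : (n - j)%N => [|k].
  rewrite /F k0 drop0; have := fnn (sset s); lra.
case s0 : s => [|x0 s'].
  by move: k0; rewrite /n s0 /= sub0n.
rewrite -s0.
have kn : (k < n)%N by lia.
have jn : (j.+1 < n.+1)%N by lia.
have dk := drop_nth x0 kn.
set x := nth x0 s k.
have xD : x \notin drop k.+1 s.
  by have := drop_uniq k us; rewrite dk /= => /andP[].
have cF : cost c (F j.+1) = c x + cost c (F j).
  rewrite /F subnS k0 /= dk sset_cons costU1 //; by rewrite in_sset.
have cx : c x <= B / 2 by apply: (chain_cheap ch); rewrite mem_nth.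
have cxp := cpos x.
have big : B / 2 < cost c (F j).
  case hB : (cost c (F j.+1) <= B).
    have := Lmax _ jn hB; rewrite cF; lra.
  move/negbT: hB; rewrite -ltNge cF; lra.
move: big; rewrite /F k0 => big.
have hg := @chain_gain (take k.+1 s) (drop k.+1 s); rewrite cat_take_drop in hg.
have := hg ch.
have hsub := subadd fnn fsub (sset (take k.+1 s)) (sset (drop k.+1 s)).
rewrite -sset_cat cat_take_drop in hsub.
move=> h.
have fP := fnn (sset (take k.+1 s)).
have h2 : f (sset (take k.+1 s)) / 2 <= f (sset (take k.+1 s)) / B * cost c (sset (drop k.+1 s)).
  have -> : f (sset (take k.+1 s)) / 2 = f (sset (take k.+1 s)) / B * (B / 2).
    by field; apply: lt0r_neq0.
  by apply: ler_wpM2l; [apply: divr_ge0 => //; apply: ltW | apply: ltW].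
lra.
Qed.

End LA2.

Section LA3.
Variables (R : realType) (T : finType) (f : {set T} -> R) (c : T -> R) (B : R)
  (tie : seq T -> seq T -> T -> bool) (ord : seq T).
Hypotheses (fnn : forall A, 0 <= f A) (f0 : f finset.set0 = 0)
  (fsub : forall A1 A2 : {set T}, f (A1 :|: A2) + f (A1 :&: A2) <= f A1 + f A2)
  (cpos : forall e, 0 < c e) (Bpos : 0 < B) (cleB : forall e, c e <= B)
  (hperm : perm_eq ord (enum T)).

Lemma uniq_ord : uniq ord.
Proof. by rewrite (perm_uniq hperm) enum_uniq. Qed.

Lemma side_bound (A : {set T}) (U V : seq T) : cost c A <= B ->
  invL f c B A ord U V -> f (sset U :|: A) <= 2 * f (sset U) + f (sset V).
Proof.
move=> cA inv; rewrite /invL (sum_ord _ _ hperm) in inv.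
set k := f (sset U) / B.
have E : \sum_(o | (o \in A) && (o \notin U))
          (f (o |: sset U) - f (sset U) - k * c o) =
         \sum_(o in A :\: sset U) (f (o |: sset U) - f (sset U) - k * c o).
  by apply: eq_bigl => o; rewrite !inE andbC.
rewrite E in inv.
have hu := union_set fsub (sset U) A.
have E2 : \sum_(a in A :\: sset U) (f (a |: sset U) - f (sset U)) =
   \sum_(a in A :\: sset U) (f (a |: sset U) - f (sset U) - k * c a) +
   \sum_(a in A :\: sset U) (k * c a).
  by rewrite -big_split; apply: eq_bigr => a _ /=; lra.
have h3 : \sum_(a in A :\: sset U) (k * c a) <= \sum_(a in A) (k * c a).
  apply: sum_sub => [a|a _]; first by rewrite inE => /andP[].
  by apply: mulr_ge0; [apply: divr_ge0 => //; apply: ltW | apply: ltW].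
have h4 : \sum_(a in A) (k * c a) <= f (sset U).
  rewrite -mulr_sumr -/(cost c A).
  have -> : f (sset U) = k * B by rewrite /k divfK // gt_eqF.
  by apply: ler_wpM2l => //; apply: divr_ge0 => //; apply: ltW.
lra.
Qed.

Lemma la_bound (A : {set T}) : (forall o, o \in A -> c o <= B / 2) -> cost c A <= B ->
  f A <= 3 * (f (sset (la_loop f c B ord tie).1) + f (sset (la_loop f c B ord tie).2)).
Proof.
move=> Ach cA.
have [s1 s2 d [c1 c2 i1 i2]] := la_loop_inv tie fnn f0 fsub cpos Bpos Ach uniq_ord.
set X := (la_loop f c B ord tie).1 in s1 s2 d c1 c2 i1 i2 *.
set Y := (la_loop f c B ord tie).2 in s1 s2 d c1 c2 i1 i2 *.
have b1 := side_bound cA i1.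
have b2 := side_bound cA i2.
have := fsub (sset X :|: A) (sset Y :|: A).
have -> : (sset X :|: A) :&: (sset Y :|: A) = A.
  apply/setP=> x; rewrite !inE.
  case xA: (x \in A); rewrite ?orbT ?orbF //=.
  by case xX: (x \in X) => //=; apply/negbTE; apply: d.
have := fnn ((sset X :|: A) :|: (sset Y :|: A)).
lra.
Qed.

Lemma la_tail_in s : la_tail c B s \in
  [seq sset (drop (size s - j) s) | j <- iota 0 (size s).+1
        & cost c (sset (drop (size s - j) s)) <= B].
Proof.
apply: argmax_in.
rewrite /= subn0 drop_size sset_nil cost0 ifT //; exact: ltW.
Qed.

Lemma la_tail_cost s : cost c (la_tail c B s) <= B.
Proof.
by case/mapP: (la_tail_in s) => j; rewrite mem_filter => /andP[h _] ->.
Qed.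

Lemma Gamma_tail b : f (la_tail c B (if b then (la_loop f c B ord tie).1
                                     else (la_loop f c B ord tie).2)) <= Gamma f c B ord tie.
Proof.
rewrite /Gamma /LA; apply: argmax_ge; rewrite mem_cat !in_cons.
by case: b; rewrite eqxx ?orbT.
Qed.

Lemma Gamma_single e : f [set e] <= Gamma f c B ord tie.
Proof.
rewrite /Gamma /LA; apply: argmax_ge; rewrite mem_cat; apply/orP; right.
by apply: map_f; rewrite mem_enum.
Qed.

Lemma LA_cost : cost c (LA f c B ord tie) <= B.
Proof.
have := @argmax_in R T f finset.set0 ([:: la_tail c B (la_loop f c B ord tie).1;
   la_tail c B (la_loop f c B ord tie).2] ++ [seq [set e] | e <- enum T]) isT.
rewrite /LA mem_cat !in_cons => /orP[/orP[/eqP->|/orP[/eqP->|//]]|]; try exact: la_tail_cost.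
by case/mapP => e _ ->; rewrite /cost big_set1.
Qed.

Lemma Gamma_ge0 : 0 <= Gamma f c B ord tie.
Proof. exact: fnn. Qed.

Lemma opt_le_Gamma (O : {set T}) r : cost c O <= B -> r \in O ->
  (forall o, o \in O :\ r -> c o <= B / 2) -> f O <= 19 * Gamma f c B ord tie.
Proof.
move=> cO rO ch.
have cA : cost c (O :\ r) <= B.
  apply: (le_trans _ cO); apply: (cost_sub cpos); by apply/subsetP => x; rewrite !inE => /andP[].
have [_ _ _ [c1 c2 _ _]] := la_loop_inv tie fnn f0 fsub cpos Bpos ch uniq_ord.
have t1 := tail_bound fnn fsub cpos Bpos c1.
have t2 := tail_bound fnn fsub cpos Bpos c2.
have g1 := Gamma_tail true; have g2 := Gamma_tail false; simpl in g1, g2.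
have hb := la_bound ch cA.
have hs := Gamma_single r.
have := fsub [set r] (O :\ r).
rewrite setD1K //.
have -> : [set r] :&: (O :\ r) = finset.set0.
  by apply/setP=> x; rewrite !inE; case: (x =P r).
rewrite f0; lra.
Qed.

End LA3.

Section DLA1.
Variables (R : realType) (T : finType) (f : {set T} -> R) (c : T -> R) (B : R)
  (tie : seq T -> seq T -> T -> bool).
Hypotheses (fnn : forall A, 0 <= f A) (f0 : f finset.set0 = 0)
  (fsub : forall A1 A2 : {set T}, f (A1 :|: A2) + f (A1 :&: A2) <= f A1 + f A2)
  (cpos : forall e, 0 < c e) (Bpos : 0 < B).

Variable th : R.
Hypothesis thpos : 0 < th.

Lemma drel_mono (U V U' V' : seq T) e : DRel f c B th U V U' V' e ->
  [/\ f (sset U) <= f (sset U'), {subset U <= U'} & {subset V <= V'}].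
Proof.
rewrite /DRel; case=> [[_ [-> ->]]|[eU [eV sp]]]; first by split.
case: sp => [[-> -> okU _]|[-> -> _ _]|[-> -> _ _]].
- split; last by [].
  + move/andP: okU => [_ okU]; have := ok_gain cpos okU.
    have := mulr_gt0 thpos (cpos e); rewrite sset_rcons; lra.
  + by move=> x xU; rewrite mem_rcons in_cons xU orbT.
- split=> //; by move=> x xU; rewrite mem_rcons in_cons xU orbT.
- by split.
Qed.

Lemma drel_disj (U V U' V' : seq T) e : DRel f c B th U V U' V' e ->
  (forall x, x \in U -> x \notin V) -> (forall x, x \in U' -> x \notin V').
Proof.
move=> [[_ [-> ->]]|[eU [eV sp]]] d; first exact: d.
case: sp => [[-> -> _ _]|[-> -> _ _]|[-> -> _ _]] // x.
  rewrite mem_rcons in_cons => /orP[/eqP->//|]; exact: d.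
move=> xU; rewrite mem_rcons in_cons negb_or d // andbT.
by apply/eqP=> xe; move: eU; rewrite -xe xU.
Qed.

Lemma drel_lin m (U V U' V' : seq T) e : m <= th -> 0 <= m -> DRel f c B th U V U' V' e ->
  m * cost c (sset U) <= f (sset U) -> m * cost c (sset U') <= f (sset U').
Proof.
move=> mth m0 [[_ [-> _]]|[eU [eV sp]]]; first by [].
case: sp => [[-> _ okU _]|[-> _ _ _]|[-> _ _ _]] // h.
move/andP: okU => [_ okU]; have := ok_gain cpos okU.
rewrite sset_rcons costU1 ?in_sset //.
have := cpos e; nra.
Qed.

Variable A : {set T}.
Variable K : R.
Hypothesis AK : forall o, o \in A -> c o + K <= B.

Definition invD (U V : seq T) :=
  \sum_(o in A :&: sset V) (f (o |: sset U) - f (sset U)) <= f (sset V).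

Lemma cost_step (U : seq T) e : e \notin U -> e \in A -> cost c (sset U) <= K ->
  cost c (e |: sset U) <= B.
Proof.
move=> eU eA cK; rewrite costU1 ?in_sset //; have := AK eA; lra.
Qed.

Lemma drel_invD (U V U' V' : seq T) e : DRel f c B th U V U' V' e ->
  (forall x, x \in U -> x \notin V) ->
  (cost c (sset U) <= K -> invD U V) -> (cost c (sset U') <= K -> invD U' V').
Proof.
move=> hR d Q cK'.
have [_ sUU' _] := drel_mono hR.
have cK : cost c (sset U) <= K.
  apply: le_trans cK'; apply: (cost_sub cpos); apply/subsetP=> x.
  by rewrite !in_sset; apply: sUU'.
have inv := Q cK; rewrite /invD in inv.
case: hR => [[_ [-> ->]]|[eU [eV sp]]]; first by rewrite /invD.
case: sp => [[-> -> okU _]|[-> -> okV okU]|[-> -> _ _]]; last by rewrite /invD.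
- rewrite /invD; apply: le_trans inv; apply: ler_sum => o.
  rewrite !inE => /andP[oA oV].
  have oU : o \notin U by apply: contraL oV; apply: d.
  have oe : o != e by apply/eqP=> oe; move: eV; rewrite -oe oV.
  rewrite sset_rcons.
  apply: dr => //; first by apply: subsetUr.
  by rewrite !inE negb_or oe oU.
- rewrite /invD sset_rcons.
  move/andP: okV => [_ okV]; have gV := ok_gain cpos okV.
  have ce := cpos e.
  case eA : (e \in A).
    have -> : A :&: (e |: sset V) = e |: (A :&: sset V).
      apply/setP=> x; rewrite !inE; case: (x =P e) => [->|]; by rewrite ?eA.
    rewrite big_setU1 /=; last by rewrite !inE negb_and eV orbT.
    case okU' : (okD f c B th U e).
      have := dens_le cpos (okU okU'); nra.
    move: okU'; rewrite /okD (cost_step eU eA cK) /= => /negbT nU.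
    have := nok_gain cpos nU; nra.
  have -> : A :&: (e |: sset V) = A :&: sset V.
    apply/setP=> x; rewrite !inE; case: (x =P e) => [->|]; by rewrite ?eA.
  have := mulr_gt0 thpos ce; lra.
Qed.

Definition pf (p U V : seq T) := forall o, o \in A -> o \in p ->
  [\/ o \in U, o \in V | f (o |: sset U) - f (sset U) < th * c o].

Lemma drel_pf p (U V U' V' : seq T) e : DRel f c B th U V U' V' e ->
  (cost c (sset U) <= K -> pf p U V) -> (cost c (sset U') <= K -> pf (rcons p e) U' V').
Proof.
move=> hR Q cK'.
have [_ sUU' sVV'] := drel_mono hR.
have cK : cost c (sset U) <= K.
  apply: le_trans cK'; apply: (cost_sub cpos); apply/subsetP=> x.
  by rewrite !in_sset; apply: sUU'.
have old := Q cK.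
move=> o oA; rewrite mem_rcons in_cons.
case oU' : (o \in U'); first by move=> _; apply: Or31.
case oV' : (o \in V'); first by move=> _; apply: Or32.
case/orP=> [/eqP oe|op]; last first.
  case: (old o oA op) => [/sUU'|/sVV'|h]; rewrite ?oU' ?oV' //.
  apply: Or33; apply: le_lt_trans h; apply: dr => //.
    by apply/subsetP=> x; rewrite !in_sset; apply: sUU'.
  by rewrite in_sset oU'.
subst o.
case: hR oU' oV' => [[/orP[eU|eV] [-> ->]]|[eU [eV sp]]]; first by rewrite eU.
  by rewrite eV.
case: sp => [[-> -> _ _]|[-> -> _ _]|[-> -> nU _]]; rewrite ?mem_rcons ?in_cons ?eqxx //.
move=> _ _; apply: Or33.
move: nU; rewrite /okD (cost_step eU oA cK) /= => nU.
have := nok_gain cpos nU; lra.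
Qed.

End DLA1.

Section DLA2.
Variables (R : realType) (T : finType) (f : {set T} -> R) (c : T -> R) (B : R)
  (tie : seq T -> seq T -> T -> bool) (ord : seq T) (eps : R).
Hypotheses (fnn : forall A, 0 <= f A) (f0 : f finset.set0 = 0)
  (fsub : forall A1 A2 : {set T}, f (A1 :|: A2) + f (A1 :&: A2) <= f A1 + f A2)
  (cpos : forall e, 0 < c e) (Bpos : 0 < B).

Local Notation th j := (theta f c B ord tie eps j).
Local Notation ph j := (phase1 f c B ord tie eps j).
Hypothesis thpos : forall j, 0 < th j.
Hypothesis thdec : forall j, th j.+1 <= th j.

Lemma lift_pass t b (Psi : seq T -> seq T -> seq T -> Prop) st :
  Psi [::] (side b st).1 (side b st).2 ->
  (forall p U V U' V' e, DRel f c B t U V U' V' e -> Psi p U V -> Psi (rcons p e) U' V') ->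
  Psi ord (side b (dla_pass f c B ord tie t st)).1 (side b (dla_pass f c B ord tie t st)).2.
Proof.
move=> h0 hs; rewrite /dla_pass -[ord]cat0s.
apply: (foldl_ind (P := fun p st => Psi p (side b st).1 (side b st).2)) => // p s e.
by apply: hs; apply: dla_rel.
Qed.

Lemma th_le j k : (j <= k)%N -> th k <= th j.
Proof.
elim: k => [|k IH]; first by rewrite leqn0 => /eqP->.
rewrite leq_eqVlt => /orP[/eqP->//|]; rewrite ltnS => /IH h.
exact: le_trans (thdec k) h.
Qed.

Lemma ph_mono1 b j : [/\ f (sset (side b (ph j)).1) <= f (sset (side b (ph j.+1)).1),
  {subset (side b (ph j)).1 <= (side b (ph j.+1)).1} &
  {subset (side b (ph j)).2 <= (side b (ph j.+1)).2}].
Proof.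
rewrite [ph j.+1]/=.
apply: (lift_pass (Psi := fun _ U V => [/\ f (sset (side b (ph j)).1) <= f (sset U),
  {subset (side b (ph j)).1 <= U} & {subset (side b (ph j)).2 <= V}])); first by split.
move=> p U V U' V' e hR [h1 h2 h3].
have [k1 k2 k3] := drel_mono cpos (thpos j) hR.
split; [exact: le_trans h1 k1 | by move=> x /h2/k2 | by move=> x /h3/k3].
Qed.

Lemma ph_mono b j k : (j <= k)%N -> [/\ f (sset (side b (ph j)).1) <= f (sset (side b (ph k)).1),
  {subset (side b (ph j)).1 <= (side b (ph k)).1} &
  {subset (side b (ph j)).2 <= (side b (ph k)).2}].
Proof.
elim: k => [|k IH]; first by rewrite leqn0 => /eqP->; split.
rewrite leq_eqVlt => /orP[/eqP->|]; first by split. rewrite ltnS => /IH [h1 h2 h3].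
have [k1 k2 k3] := ph_mono1 b k.
split; [exact: le_trans h1 k1 | by move=> x /h2/k2 | by move=> x /h3/k3].
Qed.

Lemma ph_disj b j : forall x, x \in (side b (ph j)).1 -> x \notin (side b (ph j)).2.
Proof.
elim: j => [|j IH]; first by case: b.
rewrite [ph j.+1]/=.
apply: (lift_pass (Psi := fun _ U V => forall x, x \in U -> x \notin V)) => //.
move=> p U V U' V' e hR d x; exact: drel_disj hR d x.
Qed.

Lemma ph_lin b J j : (j <= J.+1)%N ->
  th J * cost c (sset (side b (ph j)).1) <= f (sset (side b (ph j)).1).
Proof.
elim: j => [|j IH] hj.
  by case: b => /=; rewrite sset_nil cost0 mulr0 f0.
rewrite [ph j.+1]/=.
have hjJ : (j <= J)%N by rewrite -ltnS.
apply: (lift_pass (Psi := fun _ U V => th J * cost c (sset U) <= f (sset U))).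
  by apply: IH; apply: ltnW.
move=> p U V U' V' e hR h.
apply: (drel_lin cpos _ _ hR h); [exact: th_le | exact: ltW].
Qed.

Variable A : {set T}.
Variable K : R.
Hypothesis AK : forall o, o \in A -> c o + K <= B.

Lemma ph_invD b j : cost c (sset (side b (ph j)).1) <= K ->
  invD f A (side b (ph j)).1 (side b (ph j)).2.
Proof.
suff : (forall x, x \in (side b (ph j)).1 -> x \notin (side b (ph j)).2) /\
  (cost c (sset (side b (ph j)).1) <= K -> invD f A (side b (ph j)).1 (side b (ph j)).2).
  by case.
elim: j => [|j IH].
  split; first by case: b.
  by move=> _; case: b; rewrite /invD /= sset_nil setI0 big_set0 f0.
rewrite [ph j.+1]/=.
apply: (lift_pass (Psi := fun _ U V => (forall x, x \in U -> x \notin V) /\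
  (cost c (sset U) <= K -> invD f A U V))) => //.
move=> p U V U' V' e hR [d Q]; split; first by move=> x; exact: drel_disj hR d x.
exact: (drel_invD fsub cpos (thpos j) AK hR d Q).
Qed.

Lemma ph_pf b J : cost c (sset (side b (ph J.+1)).1) <= K ->
  pf f c (th J) A ord (side b (ph J.+1)).1 (side b (ph J.+1)).2.
Proof.
rewrite [ph J.+1]/=.
apply: (lift_pass (Psi := fun p U V => cost c (sset U) <= K -> pf f c (th J) A p U V)).
  by move=> _ o _.
move=> p U V U' V' e hR Q.
exact: (drel_pf fsub cpos (thpos J) AK hR Q).
Qed.

End DLA2.

Lemma crossing (R : realDomainType) (u : nat -> R) L N : L <= u 0%N -> u N < L ->
  exists J, [/\ (J < N)%N, L <= u J & u J.+1 < L].
Proof.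
move=> h0; elim: N => [|n IH] hN; first by move: hN; rewrite ltNge h0.
case: (leP L (u n)) => h; first by exists n.
by have [J [h1 h2 h3]] := IH h; exists J; split=> //; apply: ltnW.
Qed.

Section Main.
Variables (R : realType) (T : finType) (f : {set T} -> R) (c : T -> R)
    (B eps : R) (ord : seq T) (tie : seq T -> seq T -> T -> bool)
    (O : {set T}) (r : T) (N : nat).
Hypotheses (fnn : forall A, 0 <= f A) (f0 : f finset.set0 = 0)
  (fsub : forall A1 A2 : {set T}, f (A1 :|: A2) + f (A1 :&: A2) <= f A1 + f A2)
  (cpos : forall e, 0 < c e) (Bpos : 0 < B) (cleB : forall e, c e <= B)
  (hperm : perm_eq ord (enum T))
  (cO : cost c O <= B) (optH : forall A, cost c A <= B -> f A <= f O)
  (heps : 0 < eps < 1) (rO : r \in O) (rmax : forall o, o \in O -> c o <= c r)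
  (cr : (1 - eps' eps) * B <= c r)
  (stops : phase1_stops_at f c B ord tie eps N).

Local Notation e' := (eps' eps).
Local Notation G := (Gamma f c B ord tie).
Local Notation th j := (theta f c B ord tie eps j).
Local Notation ph j := (phase1 f c B ord tie eps j).
Local Notation S := (DLA f c B ord tie eps N).

Lemma ep_b : 0 < e' /\ e' < 1 / 14.
Proof. by move/andP: heps => [h1 h2]; rewrite /eps'; split; lra. Qed.

Lemma G_le : G <= f O.
Proof. exact: optH (LA_cost f tie ord Bpos cleB). Qed.

Lemma G_pos : 0 < G.
Proof.
have g0 : 0 <= G by exact: fnn.
rewrite lt_neqAle g0 andbT; apply/eqP => G0.
move: stops => [_]; rewrite /theta /theta_thr -G0.
by rewrite !(mulr0, mul0r) ltxx.
Qed.

Lemma th_pos j : 0 < th j.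
Proof.
have [e1 e2] := ep_b; have := G_pos => g.
rewrite /theta; apply: mulr_gt0; last by apply: exprn_gt0; lra.
apply: divr_gt0; first lra.
apply: mulr_gt0 => //; lra.
Qed.

Lemma th_S j : th j.+1 = (1 - e') * th j.
Proof. by rewrite /theta exprS; ring. Qed.

Lemma th_dec j : th j.+1 <= th j.
Proof.
have [e1 e2] := ep_b.
rewrite th_S mulrBl mul1r; have := mulr_gt0 e1 (th_pos j); lra.
Qed.

Lemma S_ge b : f (sset (side b (ph N)).1) <= f S /\ f (sset (side b (ph N)).2) <= f S.
Proof.
have h1 : f (sset (ph N).1) <= f S.
  by rewrite /DLA; apply: argmax_ge; rewrite mem_cat !in_cons eqxx !orbT.
have h2 : f (sset (ph N).2) <= f S.
  by rewrite /DLA; apply: argmax_ge; rewrite mem_cat !in_cons eqxx !orbT.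
by case: b.
Qed.

Lemma S_geG : G <= f S.
Proof. by rewrite /DLA; apply: argmax_ge; rewrite mem_cat !in_cons eqxx. Qed.

Local Notation A := (O :\ r).

Lemma costA : c r + cost c A = cost c O.
Proof. by rewrite -costU1 ?setD1K // !inE eqxx. Qed.

Lemma cost_elem o : o \in A -> c o <= cost c A.
Proof.
move=> oA; have -> : c o = cost c [set o] by rewrite /cost big_set1.
by apply: (cost_sub cpos); rewrite sub1set.
Qed.

Lemma costA_le : cost c A <= e' * B.
Proof. have := costA; have := cr; rewrite mulrBl mul1r. move=> h1 h2; have c0 := cO; rewrite -h2 in c0; lra. Qed.

Lemma A_cheap o : o \in A -> c o <= B / 2.
Proof.
move=> oA; have := cost_elem oA; have := costA_le; have [e1 e2] := ep_b.
have : e' * B <= 1 / 14 * B by apply: ler_wpM2r; [exact: ltW | exact: ltW].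
have := Bpos; lra.
Qed.

Lemma AK o : o \in A -> c o + (1 - e') * B <= B.
Proof. move=> oA; have := cost_elem oA; have := costA_le; rewrite mulrBl mul1r; lra. Qed.

Lemma opt19 : f O <= 19 * G.
Proof. exact: (opt_le_Gamma tie fnn f0 fsub cpos Bpos hperm cO rO A_cheap). Qed.

Local Notation L := ((1 - e') * f O / (6 * B)).

Lemma th0_ge : L <= th 0.
Proof.
have [e1 e2] := ep_b; have o19 := opt19; have o0 := fnn O; have bp := Bpos.
have g0 := G_pos.
rewrite /theta expr0 mulr1 -subr_ge0.
have -> : 19 * G / (6 * e' * B) - L = (19 * G - e' * (1 - e') * f O) / (6 * e' * B).
  by field; rewrite ?(gt_eqF bp) ?(gt_eqF e1).
apply: divr_ge0; last by apply: mulr_ge0; [apply: mulr_ge0|]; lra.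
have k1 : e' * (1 - e') <= 1 by nra.
have k : e' * (1 - e') * f O <= f O by apply: ler_piMl.
lra.
Qed.

Lemma thN_lt : th N < L.
Proof.
have [e1 e2] := ep_b; have o0 := fnn O; have bp := Bpos; have gl := G_le.
have [_ h] := stops; apply: lt_le_trans h _; rewrite /theta_thr -subr_ge0.
have -> : L - G * (1 - e') / (6 * B) = (1 - e') * (f O - G) / (6 * B).
  by field; rewrite ?(gt_eqF bp) ?(gt_eqF e1).
apply: divr_ge0; last lra.
apply: mulr_ge0; lra.
Qed.

Lemma exJ : exists J, [/\ (J < N)%N, L <= th J & th J < f O / (6 * B)].
Proof.
have [J [h1 h2 h3]] := crossing th0_ge thN_lt.
exists J; split=> //.
move: h3; rewrite th_S -mulrA ltr_pM2l //; have [e1 e2] := ep_b; lra.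
Qed.

Lemma side_main b : (1 - e') ^+ 2 / 6 * f O <= f S \/
  exists Z : {set T}, Z \subset sset (side b (ph N)).1 /\
    f (O :|: Z) <= 2 * f S + Num.max ((1 - e') * f O / 6) (f S + e' * f O / 6).
Proof.
have [J [JN hL hU]] := exJ.
have [e1 e2] := ep_b; have o0 := fnn O; have bp := Bpos.
have thJ := th_pos J.
have [m1 s1 _] := ph_mono cpos th_pos b JN.
have [sU sV] := S_ge b.
set U' := (side b (ph J.+1)).1 in m1 s1 *.
set V' := (side b (ph J.+1)).2.
have fU : f (sset U') <= f S by apply: le_trans m1 sU.
case: (leP (cost c (sset U')) ((1 - e') * B)) => hK; last first.
  left.
  have lin := ph_lin f0 cpos th_pos th_dec b (J:=J) (leqnn J.+1).
  have k : L * ((1 - e') * B) <= th J * cost c (sset U').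
    apply: ler_pM => //; last exact: ltW.
      by apply: divr_ge0; [apply: mulr_ge0|apply: mulr_ge0]; lra.
    by apply: mulr_ge0; lra.
  have -> : (1 - e') ^+ 2 / 6 * f O = L * ((1 - e') * B).
    by field; rewrite ?(gt_eqF bp) ?(gt_eqF e1).
  apply: le_trans k _; apply: le_trans lin fU.
right; exists (sset U'); split.
  by apply/subsetP => x; rewrite !in_sset; apply: s1.
set Z := sset U'.
have hu := union_set fsub Z O.
rewrite setUC.
rewrite (bigID (pred1 r)) /= in hu.
have hS1 : \sum_(i in O :\: Z | i == r) (f (i |: Z) - f Z) <= f [set r].
  case rZ : (r \in U').
    rewrite big_pred0 ?fnn // => i; rewrite !inE.
    by case: (i =P r) => [->|]; rewrite ?rZ ?andbF.
  rewrite (big_pred1 r) => [|i]; last first.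
    by rewrite !inE; case: (i =P r) => [->|]; rewrite ?rZ ?rO ?andbF.
  have := @dr _ _ f fsub finset.set0 Z r (sub0set _).
  rewrite setU0 f0 subr0; apply; by rewrite in_sset rZ.
have E2 : \sum_(i in O :\: Z | i != r) (f (i |: Z) - f Z) =
    \sum_(i | (i \in A) && (i \notin U')) (f (i |: Z) - f Z).
  apply: eq_bigl => i; rewrite !inE.
  by case: (i == r); case: (i \in U'); case: (i \in O).
rewrite E2 in hu.
have E3 : \sum_(i | (i \in A) && (i \notin U')) (f (i |: Z) - f Z) =
   \sum_(i | ((i \in A) && (i \notin U')) && (i \in V')) (f (i |: Z) - f Z) +
   \sum_(i | ((i \in A) && (i \notin U')) && (i \notin V')) (f (i |: Z) - f Z).
  by rewrite (bigID (fun i => i \in V')).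
rewrite E3 in hu.
have hS2 : \sum_(i | ((i \in A) && (i \notin U')) && (i \in V')) (f (i |: Z) - f Z)
    <= f (sset V').
  have hi := ph_invD f0 fsub cpos th_pos AK (b:=b) (j:=J.+1) hK.
  rewrite /invD in hi; apply: le_trans hi.
  rewrite (eq_bigl (fun i => i \in A :&: sset V')) // => i; rewrite !inE.
  case iU : (i \in U'); last by case: (i \in V'); rewrite /= ?andbT ?andbF.
  case iV : (i \in V'); rewrite /= ?andbT ?andbF //.
  by move: (ph_disj iU); rewrite -/V' iV.
have hS3 : \sum_(i | ((i \in A) && (i \notin U')) && (i \notin V')) (f (i |: Z) - f Z)
    <= th J * cost c A.
  apply: (@le_trans _ _ (\sum_(i | ((i \in A) && (i \notin U')) && (i \notin V')) (th J * c i))).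
    apply: ler_sum => i /andP[/andP[iA iU] iV].
    have iord : i \in ord by rewrite (perm_mem hperm) mem_enum.
    case: (ph_pf fsub cpos th_pos AK (b:=b) (J:=J) hK iA iord) => h.
    - by rewrite h in iU.
    - by rewrite h in iV.
    - exact: ltW.
  rewrite /cost mulr_sumr; apply: sum_sub => [i /andP[/andP[]]//|i _].
  by apply: mulr_ge0; [exact: ltW | exact: ltW].
have mV : f (sset V') <= f S.
  have [m2 _ _] := ph_mono cpos th_pos (~~ b) JN.
  have [sU2 _] := S_ge (~~ b).
  have eb : forall st : seq T * seq T, (side (~~ b) st).1 = (side b st).2 by clear; case: b.
  rewrite !eb in m2 sU2; exact: le_trans m2 sU2.
have rG := Gamma_single f c B tie ord r.
have GS := S_geG.
have t1 : th J * cost c A <= th J * (e' * B) by apply: ler_wpM2l; [exact: ltW | exact: costA_le].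
have t2 : th J * (e' * B) <= f O / (6 * B) * (e' * B).
  by apply: ler_wpM2r; [apply: mulr_ge0; lra | exact: ltW].
have t3 : f O / (6 * B) * (e' * B) = e' * f O / 6 by field; rewrite ?(gt_eqF bp) ?(gt_eqF e1).
have mx : f S + e' * f O / 6 <= Num.max ((1 - e') * f O / 6) (f S + e' * f O / 6).
  by rewrite le_max lexx orbT.
lra.
Qed.

End Main.
Theorem lemma4 (R : realType) (T : finType) (f : {set T} -> R) (c : T -> R)
    (B eps : R) (ord : seq T) (tie : seq T -> seq T -> T -> bool)
    (O : {set T}) (r : T) (N : nat) :
  (forall A, 0 <= f A) -> f (finset.set0 : {set T}) = 0 ->
  (forall A1 A2 : {set T}, f (A1 :|: A2) + f (A1 :&: A2) <= f A1 + f A2) ->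
  (forall e, 0 < c e) -> 0 < B -> (forall e, c e <= B) ->
  perm_eq ord (enum T) ->
  cost c O <= B -> (forall A, cost c A <= B -> f A <= f O) ->
  0 < eps < 1 ->
  r \in O -> (forall o, o \in O -> c o <= c r) ->
  (1 - eps' eps) * B <= c r ->
  phase1_stops_at f c B ord tie eps N ->
  let S := DLA f c B ord tie eps N in
  let X := sset (phase1 f c B ord tie eps N).1 in
  let Y := sset (phase1 f c B ord tie eps N).2 in
  let opt := f O in
  let e' := eps' eps in
  (f S >= (1 - e') ^+ 2 / 6 * opt \/
   exists X' : {set T}, X' \subset X /\
     f (O :|: X') <= 2 * f S + Num.max ((1 - e') * opt / 6) (f S + e' * opt / 6)) /\
  (f S >= (1 - e') ^+ 2 / 6 * opt \/
   exists Y' : {set T}, Y' \subset Y /\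
     f (O :|: Y') <= 2 * f S + Num.max ((1 - e') * opt / 6) (f S + e' * opt / 6)).

Proof.
move=> fnn f0 fsub cpos Bpos cleB hperm cO optH heps rO rmax cr stops.
cbv zeta.
split.
- exact: (side_main fnn f0 fsub cpos Bpos cleB hperm cO optH heps rO cr stops true).
- exact: (side_main fnn f0 fsub cpos Bpos cleB hperm cO optH heps rO cr stops false).
Qed.
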